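(* Let $k$ be an infinite field, let $\Gamma$ be a finite simplicial complex of dimension $d-1$, and let $S_1,\ldots,S_d$ be subsets of the vertex set of $\Gamma$. Then there is an l.s.o.p. $\theta_1,\ldots,\theta_d$ for the face ring $k[\Gamma]$ with $\mathrm{supp}(\theta_i)=S_i$ for $1\le i\le d$ if and only if, for every face $F\in\Gamma$, $|\{i: S_i\cap F\ne\emptyset\}|\ge|F|$.
   Context: $k[\Gamma]$ is the face ring: the polynomial ring in variables $x_w$ indexed by the vertices of $\Gamma$ modulo the monomials $x^F=\prod_{w\in F}x_w$ for non-faces $F$, graded by degree. The support of a degree-one element $\theta=\sum a_wx_w$ is $\{w:a_w\ne0\}$. An l.s.o.p. for $k[\Gamma]$ (Krull dimension $d$) is a sequence of $d$ degree-one elements $\theta_1,\ldots,\theta_d$ such that $k[\Gamma]/(\theta_1,\ldots,\theta_d)$ is finite-dimensional over $k$. *)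

(* Defs.v *)
From HB Require Import structures.
From mathcomp Require Import all_boot all_order all_algebra.
From mathcomp Require Import mpoly.
Set Implicit Arguments. Unset Strict Implicit. Unset Printing Implicit Defensive.
Import Order.TTheory GRing.Theory.
Local Open Scope ring_scope.

Definition infinite_field (k : fieldType) : Prop :=
  forall s : seq k, exists x : k, x \notin s.

Definition simplicial_complex n (Gamma : {set {set 'I_n}}) : Prop :=
  set0 \in Gamma /\ forall F G : {set 'I_n}, F \in Gamma -> G \subset F -> G \in Gamma.

Definition vertices n (Gamma : {set {set 'I_n}}) : {set 'I_n} :=
  [set w | [set w] \in Gamma].

(* dim Gamma = d - 1  iff the maximal face cardinality is d. *)
Definition has_dim_minus1 n (Gamma : {set {set 'I_n}}) (d : nat) : Prop :=
  (\max_(F in Gamma) #|F|)%N = d.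

Definition monoF (k : fieldType) n (F : {set 'I_n}) : {mpoly k[n]} :=
  \prod_(w in F) 'X_w.

Definition linform (k : fieldType) n (a : 'I_n -> k) : {mpoly k[n]} :=
  \sum_(w < n) a w *: 'X_w.
Definition supp (k : fieldType) n (a : 'I_n -> k) : {set 'I_n} :=
  [set w | a w != 0].

Definition in_ideal (k : fieldType) n (G : seq {mpoly k[n]}) (p : {mpoly k[n]}) : Prop :=
  exists cs : seq {mpoly k[n]},
    size cs = size G /\ p = \sum_(i < size G) cs`_i * G`_i.

Definition fin_dim_quotient (k : fieldType) n (G : seq {mpoly k[n]}) : Prop :=
  exists B : seq {mpoly k[n]}, forall p : {mpoly k[n]},
    exists c : seq k, in_ideal G (p - \sum_(i < size B) c`_i *: B`_i).

Definition SR_gens (k : fieldType) n (Gamma : {set {set 'I_n}}) : seq {mpoly k[n]} :=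
  [seq monoF k F | F <- enum [set F : {set 'I_n} | F \notin Gamma]].

(* theta_1..theta_d is an l.s.o.p. for k[Gamma]:
   k[Gamma]/(theta) = k[x]/(I_Gamma + (theta)) is finite-dimensional. *)
Definition is_lsop (k : fieldType) n d (Gamma : {set {set 'I_n}})
    (theta : 'I_d -> {mpoly k[n]}) : Prop :=
  fin_dim_quotient (SR_gens k Gamma ++ [seq theta i | i <- enum 'I_d]).

(* Main.v *)
Require Import Defs.
From HB Require Import structures.
From mathcomp Require Import all_boot all_order all_algebra.
From mathcomp Require Import mpoly.
From Stdlib Require Import FunctionalExtensionality Classical_Prop.
Set Implicit Arguments. Unset Strict Implicit. Unset Printing Implicit Defensive.
Import Order.TTheory GRing.Theory.
Local Open Scope ring_scope.
Section Hall.
Variables (I J : finType) (E : J -> I -> bool).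
Definition nb (H : {set J}) (T : {set I}) : {set I} :=
  [set i in T | [exists w in H, E w i]].

Lemma nbU H K T : nb (H :|: K) T = nb H T :|: nb K T.
Proof.
apply/setP=> i; rewrite !inE; case: (i \in T) => //=.
apply/idP/idP.
  case/existsP=> w /andP[]; rewrite inE => /orP[] wH Ew; apply/orP; [left|right]; apply/existsP; exists w; by rewrite wH.
by case/orP=> /existsP[w /andP[wH Ew]]; apply/existsP; exists w; rewrite inE wH ?orbT.
Qed.

Lemma hall (i0 : I) m : forall (G : {set J}) (T : {set I}), (#|G| <= m)%N ->
  (forall H : {set J}, H \subset G -> (#|H| <= #|nb H T|)%N) ->
  exists s : J -> I, {in G &, injective s} /\
     forall w, w \in G -> (s w \in T) && E w (s w).
Proof.
elim: m => [|m IH] G T.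
  rewrite leqn0 cards_eq0 => /eqP -> _.
  by exists (fun _ => i0); split=> [x y|w]; rewrite inE.
move=> cG hyp.
have [tight|loose] := boolP [exists H : {set J}, [&& H != set0, H \proper G & (#|nb H T| <= #|H|)%N]].
  case/existsP: tight => H /and3P[Hn0 HG cH].
  have sHG : H \subset G by apply: proper_sub.
  have cH' : (#|H| <= m)%N.
    by rewrite -ltnS; apply: leq_trans cG; apply: proper_card.
  have [s1 [inj1 P1]] := IH H T cH' (fun K KH => hyp K (subset_trans KH sHG)).
  pose T' := T :\: nb H T.
  have cGH : (#|G :\: H| <= m)%N.
    rewrite -ltnS; apply: leq_trans cG.
    rewrite (cardsD G H) (setIidPr sHG).
    have: (0 < #|H|)%N by rewrite card_gt0.
    have: (#|H| <= #|G|)%N by apply: subset_leq_card.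
    move=> a b; rewrite ltn_subrL b /=; apply: leq_trans b a.
  have hyp2 : forall K : {set J}, K \subset G :\: H -> (#|K| <= #|nb K T'|)%N.
    move=> K KGH.
    have dKH : [disjoint K & H].
      rewrite -setI_eq0; apply/eqP/setP=> w; rewrite !inE.
      apply/andP=> [[wK wH]]; move/subsetP: KGH => /(_ w wK).
      by rewrite inE wH.
    have sKG : K \subset G by apply: subset_trans KGH (subsetDl _ _).
    have := hyp (K :|: H); rewrite subUset sKG sHG => /(_ isT).
    have e0 : K :&: H = set0 by apply/eqP; rewrite setI_eq0.
    rewrite cardsU e0 cards0 subn0.
    rewrite nbU => h1.
    have h2 : (#|nb K T :|: nb H T| <= #|nb K T'| + #|nb H T|)%N.
      apply: leq_trans (leq_card_setU (nb K T') (nb H T)).1.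
      apply: subset_leq_card.
      apply/subsetP=> i; rewrite !inE => /orP[/andP[iT ->]|->]; last by rewrite !orbT.
      by rewrite iT /= andbT; case: ([exists w in H, E w i]).
    by rewrite -(leq_add2r #|H|); apply: leq_trans h1 (leq_trans h2 _); rewrite leq_add2l.
  have [s2 [inj2 P2]] := IH (G :\: H) T' cGH hyp2.
  exists (fun w => if w \in H then s1 w else s2 w); split.
    move=> x y xG yG /=.
    case xH: (x \in H); case yH: (y \in H).
    - exact: inj1.
    - move=> e; have := P2 y; rewrite inE yH yG => /(_ isT) /andP[].
      rewrite -e inE => /andP[] /negP nn _ _; exfalso; apply: nn.
      have /andP[xT Ex] := P1 x xH.
      by rewrite inE xT; apply/existsP; exists x; rewrite xH.
    - move=> e; have := P2 x; rewrite inE xH xG => /(_ isT) /andP[].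
      rewrite e inE => /andP[] /negP nn _ _; exfalso; apply: nn.
      have /andP[yT Ey] := P1 y yH.
      by rewrite inE yT; apply/existsP; exists y; rewrite yH.
    - by apply: inj2; rewrite inE ?xH ?yH.
  move=> w wG; case wH: (w \in H); first exact: P1.
  have := P2 w; rewrite !inE wH wG => /(_ isT) /andP[] /andP[_ ->] -> //.
have [Gnil|[w wG]] := set_0Vmem G.
  by exists (fun _ => i0); split=> [x y|x]; rewrite Gnil inE.
have := hyp [set w]; rewrite sub1set wG cards1 => /(_ isT).
rewrite card_gt0 => /set0Pn [i]; rewrite inE => /andP[iT /existsP[w' /andP[]]].
rewrite inE => /eqP -> Ewi.
pose T' := T :\ i.
have cGw : (#|G :\ w| <= m)%N.
  by rewrite -ltnS; apply: leq_trans cG; rewrite (cardsD1 w G) wG.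
have hyp2 : forall K : {set J}, K \subset G :\ w -> (#|K| <= #|nb K T'|)%N.
  move=> K KGw.
  have [->|Kn0] := eqVneq K set0; first by rewrite cards0.
  have KpG : K \proper G.
    rewrite properEneq (subset_trans KGw (subsetDl _ _)) andbT.
    apply/negP=> /eqP e; move/subsetP: KGw => /(_ w); rewrite e wG.
    by rewrite !inE eqxx => /(_ isT).
  have lt : (#|K| < #|nb K T|)%N.
    rewrite ltnNge; apply/negP=> le; move/negP: loose; apply.
    by apply/existsP; exists K; rewrite Kn0 KpG le.
  have : (#|nb K T| <= #|nb K T'|.+1)%N.
    rewrite -add1n -(cards1 i); apply: leq_trans (leq_card_setU _ _).
    apply: subset_leq_card; apply/subsetP=> j; rewrite !inE.
    by case: eqP => //= _ ->.
  by move=> h; rewrite -ltnS; apply: leq_trans lt h.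
have [s2 [inj2 P2]] := IH (G :\ w) T' cGw hyp2.
exists (fun x => if x == w then i else s2 x); split.
  move=> x y xG yG /=.
  case: (eqVneq x w) => [->|xw]; case: (eqVneq y w) => [->|yw] //.
  - move=> e; have := P2 y; rewrite !inE yw yG => /(_ isT).
    by rewrite -e eqxx.
  - move=> e; have := P2 x; rewrite !inE xw xG => /(_ isT).
    by rewrite e eqxx.
  - by apply: inj2; rewrite !inE ?xw ?yw.
move=> x xG; case: (eqVneq x w) => [->|xw]; first by rewrite iT Ewi.
by have := P2 x; rewrite !inE xw xG => /(_ isT) /andP[] /andP[_ ->] ->.
Qed.
End Hall.
Section Generic.
Variables (k : fieldType) (A : Type) (Ix : eqType) (F : Ix -> (A -> k) -> k).
Hypothesis inf : infinite_field k.

Definition lineP (x y : A -> k) (t : k) : A -> k := fun e => x e + t * (y e - x e).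
Definition polyline (f : (A -> k) -> k) :=
  forall x y, exists p : {poly k}, forall t, f (lineP x y t) = p.[t].

Lemma poly_nonroot (p : {poly k}) : p != 0 -> exists t, ~~ root p t.
Proof.
move=> p0; apply: NNPP => nH.
have allr : forall t, root p t by move=> t; apply/negPn/negP => h; apply: nH; exists t.
have : forall m, exists s : seq k, [/\ uniq s, size s = m & all (root p) s].
  elim=> [|m [s [us ss rs]]]; first by exists [::].
  have [x xs] := inf s; exists (x :: s); rewrite /= xs us ss rs andbT; split=> //.
  by rewrite allr.
move=> /(_ (size p)) [s [us ss rs]].
by have := max_poly_roots p0 rs us; rewrite ss ltnn.
Qed.

Lemma line0 x y : lineP x y 0 = x.
Proof. by apply: functional_extensionality => e; rewrite /lineP mul0r addr0. Qed.
Lemma line1 x y : lineP x y 1 = y.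
Proof. by apply: functional_extensionality => e; rewrite /lineP mul1r addrC subrK. Qed.

Lemma line_poly (s : seq Ix) x y : (forall j, j \in s -> polyline (F j)) ->
  (forall j, j \in s -> F j x != 0 \/ F j y != 0) ->
  exists P : {poly k}, P != 0 /\ forall t, ~~ root P t -> forall j, j \in s -> F j (lineP x y t) != 0.
Proof.
elim: s => [|j s IH] pl nz.
  by exists 1; split=> [|t _ j]; rewrite ?oner_eq0 ?in_nil.
have sub : {subset s <= j :: s} by move=> z zs; rewrite in_cons zs orbT.
have [P [P0 HP]] := IH (fun j' h => pl j' (sub _ h)) (fun j' h => nz j' (sub _ h)).
have [p Hp] := pl j (mem_head _ _) x y.
have p0 : p != 0.
  apply/eqP=> e; move: Hp; rewrite e => Hp.
  case: (nz j (mem_head _ _)) => /eqP; apply.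
    by rewrite -(line0 x y) Hp horner0.
  by rewrite -(line1 x y) Hp horner0.
exists (p * P); split; first by rewrite mulf_neq0.
move=> t; rewrite rootM negb_or => /andP[rp rP] j'; rewrite in_cons => /orP[/eqP ->|].
  by rewrite Hp.
exact: HP.
Qed.

Lemma common (s : seq Ix) : (forall j, j \in s -> polyline (F j) /\ exists x, F j x != 0) ->
  exists x, forall j, j \in s -> F j x != 0.
Proof.
elim: s => [|j s IH] H; first by exists (fun _ => 0) => j; rewrite in_nil.
have sub : {subset s <= j :: s} by move=> z zs; rewrite in_cons zs orbT.
have [x Hx] := IH (fun j' h => H j' (sub _ h)).
have [_ [y Hy]] := H j (mem_head _ _).
have nz : forall j', j' \in j :: s -> F j' x != 0 \/ F j' y != 0.
  move=> j'; rewrite in_cons => /orP[/eqP ->|/Hx]; [right|left] => //.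
have [P [P0 HP]] := @line_poly (j :: s) x y (fun j' h => (H j' h).1) nz.
by have [t Ht] := poly_nonroot P0; exists (lineP x y t); apply: HP.
Qed.
End Generic.

Section Construct.
Variables (k : fieldType) (n d : nat) (Gamma : {set {set 'I_n}}) (S : 'I_d -> {set 'I_n})
  (sig : {set 'I_n} -> 'I_n -> 'I_d).
Hypothesis inf : infinite_field k.
Hypothesis hsig : forall G, G \in Gamma ->
  {in G &, injective (sig G)} /\ forall w, w \in G -> w \in S (sig G w).

Definition mask (x : 'I_d * 'I_n -> k) i w := if w \in S i then x (i, w) else 0.
Definition NG (G : {set 'I_n}) x : 'M[k]_#|G| :=
  \matrix_(j, l) mask x (sig G (enum_val j)) (enum_val l).
Local Notation Ix := ({set 'I_n} + ('I_d * 'I_n))%type.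
Definition Fx (j : Ix) (x : 'I_d * 'I_n -> k) : k :=
  match j with
  | inl G => if G \in Gamma then \det (NG G x) else 1
  | inr (i, w) => if w \in S i then x (i, w) else 1
  end.

Lemma Fx_polyline j : polyline (Fx j).
Proof.
move=> x y; case: j => [G|[i w]] /=.
  case: (G \in Gamma); last by exists 1 => t; rewrite hornerC.
  pose M : 'M[{poly k}]_#|G| := \matrix_(j, l)
    (if enum_val l \in S (sig G (enum_val j))
     then (x (sig G (enum_val j), enum_val l))%:P
       + (y (sig G (enum_val j), enum_val l) - x (sig G (enum_val j), enum_val l))%:P * 'X
     else 0).
  exists (\det M) => t; rewrite -horner_evalE -det_map_mx; congr (\det _).
  apply/matrixP => j l; rewrite !mxE /mask /lineP.
  case: ifP => _; last by rewrite rmorph0.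
  by rewrite /= horner_evalE !hornerE mulrC.
case: (w \in S i); last by exists 1 => t; rewrite hornerC.
exists ((x (i, w))%:P + (y (i, w) - x (i, w))%:P * 'X) => t.
by rewrite /lineP !hornerE mulrC.
Qed.

Lemma Fx_wit j : exists x, Fx j x != 0.
Proof.
case: j => [G|[i w]] /=; last first.
  by exists (fun _ => 1); case: (w \in S i); rewrite oner_neq0.
case GG: (G \in Gamma); last by exists (fun _ => 0); rewrite oner_neq0.
have [inj mat] := hsig GG.
exists (fun e => if e.1 == sig G e.2 then 1 else 0).
suff -> : NG G (fun e => if e.1 == sig G e.2 then 1 else 0) = 1%:M by rewrite det1 oner_neq0.
apply/matrixP => j l; rewrite !mxE /mask /=.
case: (eqVneq j l) => [<-|jl].
  by rewrite mat ?enum_valP // eqxx.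
case: ifP => // _; case: eqP => // e.
exfalso; move/eqP: jl; apply; apply: enum_val_inj; apply: inj; rewrite ?enum_valP //.
Qed.

Lemma construct : exists a : 'I_d -> 'I_n -> k,
  (forall i, supp (a i) = S i) /\
  (forall G, G \in Gamma -> forall w, w \in G ->
     exists lam : 'I_d -> k, forall u, u \in G -> \sum_i lam i * a i u = (u == w)%:R).
Proof.
have [x Hx] := @common k ('I_d * 'I_n) Ix Fx inf (enum {: Ix})
  (fun j _ => conj (Fx_polyline j) (Fx_wit j)).
exists (mask x); split.
  move=> i; apply/setP => w; rewrite /supp inE /mask.
  case: ifP => wS; last by rewrite eqxx.
  by have := Hx (inr (i, w)) (mem_enum _ _); rewrite /= wS.
move=> G GG w wG.
have := Hx (inl G) (mem_enum _ _); rewrite /= GG => dN.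
have uN : NG G x \in unitmx by rewrite unitmxE unitfE.
pose l0 := enum_rank_in wG w.
pose mu : 'rV[k]_#|G| := delta_mx 0 l0 *m invmx (NG G x).
have muN : mu *m NG G x = delta_mx 0 l0 by rewrite /mu mulmxKV.
exists (fun i => \sum_j (if sig G (enum_val j) == i then mu 0 j else 0)).
move=> u uG.
have -> : u = enum_val (enum_rank_in wG u) by rewrite enum_rankK_in.
set l := enum_rank_in wG u.
transitivity ((mu *m NG G x) 0 l); last first.
  rewrite muN mxE eqxx /=.
  have -> : (enum_val l == w) = (l0 == l).
    apply/eqP/eqP => [e|<-]; first by have := enum_valK_in wG l; rewrite e.
    by rewrite /l0 enum_rankK_in.
  by rewrite eq_sym.
rewrite mxE; under eq_bigr => i _ do rewrite mulr_suml.
rewrite exchange_big /=; apply: eq_bigr => j _.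
rewrite (bigD1 (sig G (enum_val j))) //= eqxx big1 ?addr0.
  congr (_ * _); rewrite /NG; symmetry; exact: (mxE _ (fun j0 l0 => mask x (sig G (enum_val j0)) (enum_val l0))) j l.
by move=> i /negbTE ne; rewrite eq_sym ne mul0r.
Qed.
End Construct.
Section Ideal.
Variables (k : fieldType) (n : nat) (G : seq {mpoly k[n]}).

Lemma in_idealP p : in_ideal G p <->
  exists f : 'I_(size G) -> {mpoly k[n]}, p = \sum_i f i * G`_i.
Proof.
split=> [[cs [_ ->]]|[f ->]]; first by exists (fun i => cs`_i).
exists (mkseq (fun j => if insub j is Some i then f i else 0) (size G)).
rewrite size_mkseq; split=> //.
by apply: eq_bigr => i _; rewrite nth_mkseq // valK.
Qed.

Lemma ideal0 : in_ideal G 0.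
Proof. by apply/in_idealP; exists (fun _ => 0); rewrite big1 // => i _; rewrite mul0r. Qed.

Lemma idealD p q : in_ideal G p -> in_ideal G q -> in_ideal G (p + q).
Proof.
move=> /in_idealP [f ->] /in_idealP [g ->]; apply/in_idealP; exists (fun i => f i + g i).
by rewrite -big_split; apply: eq_bigr => i _; rewrite mulrDl.
Qed.

Lemma idealMl q p : in_ideal G p -> in_ideal G (q * p).
Proof.
move=> /in_idealP [f ->]; apply/in_idealP; exists (fun i => q * f i).
by rewrite mulr_sumr; apply: eq_bigr => i _; rewrite mulrA.
Qed.

Lemma idealZ c p : in_ideal G p -> in_ideal G (c *: p).
Proof. by move=> h; rewrite -mul_mpolyC; apply: idealMl. Qed.

Lemma idealN p : in_ideal G p -> in_ideal G (- p).
Proof. by move=> h; rewrite -scaleN1r; apply: idealZ. Qed.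

Lemma idealB p q : in_ideal G p -> in_ideal G q -> in_ideal G (p - q).
Proof. by move=> hp hq; apply: idealD => //; apply: idealN. Qed.

Lemma ideal_sum (I : Type) (r : seq I) (P : pred I) (F : I -> {mpoly k[n]}) :
  (forall i, P i -> in_ideal G (F i)) -> in_ideal G (\sum_(i <- r | P i) F i).
Proof.
move=> h; elim/big_rec: _ => [|i x Pi hx]; first exact: ideal0.
by apply: idealD => //; apply: h.
Qed.

Lemma ideal_gen p : p \in G -> in_ideal G p.
Proof.
move=> pG; apply/in_idealP.
have jlt : (index p G < size G)%N by rewrite index_mem.
exists (fun i => if val i == index p G then 1 else 0).
rewrite (bigD1 (Ordinal jlt)) //= eqxx mul1r nth_index // big1 ?addr0 //.
move=> i ij; case: eqP => [e|]; last by rewrite mul0r.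
by move: ij; rewrite -val_eqE /= e eqxx.
Qed.

End Ideal.

Section Reduce.
Variables (k : fieldType) (n d : nat) (Gamma : {set {set 'I_n}}) (a : 'I_d -> 'I_n -> k).
Local Notation Gs := (SR_gens k Gamma ++ [seq (fun i => linform (a i)) i | i <- enum 'I_d]).
Hypothesis hbound : forall F, F \in Gamma -> (#|F| <= d)%N.
Hypothesis hspan : forall G, G \in Gamma -> forall w, w \in G ->
  exists lam : 'I_d -> k, forall u, u \in G -> \sum_i lam i * a i u = (u == w)%:R.

Definition suppm (m : 'X_{1..n}) : {set 'I_n} := [set w | m w != 0%N].

Lemma SRin F : F \notin Gamma -> in_ideal Gs (monoF k F).
Proof.
move=> nF; apply: ideal_gen; rewrite mem_cat; apply/orP; left.
by apply: map_f; rewrite mem_enum inE.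
Qed.

Lemma thin i : in_ideal Gs (linform (a i)).
Proof.
apply: ideal_gen; rewrite mem_cat; apply/orP; right.
by apply/mapP; exists i; rewrite ?mem_enum.
Qed.

Lemma nonface m : suppm m \notin Gamma -> in_ideal Gs 'X_[m].
Proof.
move=> nF; set F := suppm m in nF.
pose sF := (\sum_(w in F) U_(w))%MM.
have sFE i : sF i = (i \in F) :> nat.
  rewrite /sF mnm_sumE; case: (boolP (i \in F)) => iF.
    rewrite (bigD1 i) //= mnm1E eqxx big1 // => j /andP[_ ji].
    by rewrite mnm1E (negbTE ji).
  by rewrite big1 // => j jF; rewrite mnm1E; case: eqP => // e; move: iF; rewrite -e jF.
have le : (sF <= m)%MM.
  apply/mnm_lepP => i; rewrite sFE; case: (boolP (i \in F)) => //.
  by rewrite inE lt0n.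
have -> : 'X_[m] = 'X_[m - sF] * monoF k F.
  by rewrite /monoF mprodXE -mpolyXD submK.
by apply: idealMl; apply: SRin.
Qed.

Lemma lincomb (lam : 'I_d -> k) :
  \sum_i lam i *: linform (a i) = \sum_u (\sum_i lam i * a i u) *: 'X_u.
Proof.
rewrite /linform; under eq_bigr => i _ do rewrite scaler_sumr.
rewrite exchange_big /=; apply: eq_bigr => u _.
by rewrite scaler_suml; apply: eq_bigr => i _; rewrite scalerA.
Qed.

Lemma big_exp m : (#|suppm m| < mdeg m)%N -> exists w, (1 < m w)%N.
Proof.
move=> h; case: (boolP [exists w, 1 < m w]%N) => [/existsP[w hw]|/existsPn hn]; first by exists w.
exfalso; move: h; rewrite ltnNge => /negP; apply.
rewrite mdegE -sum1_card [X in (_ <= X)%N]big_mkcond /=; apply: leq_sum => i _.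
rewrite inE; case: eqP => [->|_] //=.
by have := hn i; rewrite -leqNgt.
Qed.

Lemma reduce_aux K : forall m, (#|~: suppm m| < K)%N -> (d < mdeg m)%N -> in_ideal Gs 'X_[m].
Proof.
elim: K => [|K IH] m // cK dm.
case: (boolP (suppm m \in Gamma)) => Gm; last exact: nonface.
set G := suppm m in Gm cK.
have [w w2] : exists w, (1 < m w)%N.
  by apply: big_exp; apply: leq_ltn_trans (hbound Gm) dm.
have wG : w \in G by rewrite inE -lt0n; apply: ltnW.
have [lam hlam] := hspan Gm wG.
pose c u := \sum_i lam i * a i u.
pose l := \sum_i lam i *: linform (a i).
have lI : in_ideal Gs l by apply: ideal_sum => i _; apply: idealZ; apply: thin.
pose m0 := (m - U_(w))%MM.
have mE : m = (m0 + U_(w))%MM by rewrite submK // lep1mP -lt0n ltnW.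
have iden : 'X_[m0] * l = \sum_u c u *: 'X_[m0 + U_(u)].
  rewrite /l lincomb mulr_sumr; apply: eq_bigr => u _.
  by rewrite -scalerAr mpolyXD.
rewrite (bigID (fun u => u \in G)) /= in iden.
have e1 : \sum_(u | u \in G) c u *: 'X_[m0 + U_(u)] = 'X_[m] :> {mpoly k[n]}.
  rewrite (bigD1 w) //= /c hlam // eqxx scale1r -mE big1 ?addr0 //.
  by move=> u /andP[uG uw]; rewrite hlam // (negbTE uw) scale0r.
rewrite e1 in iden.
have -> : 'X_[m] = 'X_[m0] * l - \sum_(u | u \notin G) c u *: 'X_[m0 + U_(u)].
  by rewrite iden addrK.
apply: idealB; first exact: idealMl.
apply: ideal_sum => u uG; apply: idealZ; apply: IH; last first.
  by move: dm; rewrite mE !mdegD !mdeg1.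
have sE : suppm (m0 + U_(u))%MM = u |: G.
  apply/setP=> i; rewrite !inE mnmDE mnm1E /m0 mnmBE mnm1E.
  case: (eqVneq i u) => [e|ui]; first by rewrite e /= addn1. rewrite addn0 /=.
  case: (eqVneq w i) => [e|iw]; last by rewrite subn0.
  by rewrite -e /= subn1; move: w2; case: (m w) => [|[|j]].
rewrite sE; rewrite ltnS in cK; apply: leq_trans cK.
have uC : u \in ~: G by rewrite inE.
rewrite setCU (cardsD1 u (~: G)) uC add1n ltnS; apply: subset_leq_card.
apply/subsetP=> i; rewrite !inE => /andP[iu iG]; rewrite iG andbT; exact: iu.
Qed.

Lemma reduce m : (d < mdeg m)%N -> in_ideal Gs 'X_[m].
Proof. by apply: (@reduce_aux #|~: suppm m|.+1). Qed.

Definition Bs : seq {mpoly k[n]} := [seq 'X_[bmnm b] | b <- enum {: 'X_{1..n < d.+1}}].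
Definition Rep p := exists c : seq k, in_ideal Gs (p - \sum_(i < size Bs) c`_i *: Bs`_i).

Lemma Rep0 : Rep 0.
Proof.
exists [::]; rewrite big1 ?subr0; first exact: ideal0.
by move=> i _; rewrite nth_nil scale0r.
Qed.

Lemma RepD p q : Rep p -> Rep q -> Rep (p + q).
Proof.
move=> [c hc] [c' hc']; exists (mkseq (fun i => c`_i + c'`_i) (size Bs)).
have -> : \sum_(i < size Bs) (mkseq (fun i => c`_i + c'`_i) (size Bs))`_i *: Bs`_i
   = \sum_(i < size Bs) c`_i *: Bs`_i + \sum_(i < size Bs) c'`_i *: Bs`_i.
  by rewrite -big_split; apply: eq_bigr => i _; rewrite nth_mkseq // scalerDl.
have -> : p + q - (\sum_(i < size Bs) c`_i *: Bs`_i + \sum_(i < size Bs) c'`_i *: Bs`_i)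
  = (p - \sum_(i < size Bs) c`_i *: Bs`_i) + (q - \sum_(i < size Bs) c'`_i *: Bs`_i).
  by rewrite opprD !addrA; congr (_ + _); rewrite -!addrA; congr (_ + _); rewrite addrC.
exact: idealD.
Qed.

Lemma RepZ x p : Rep p -> Rep (x *: p).
Proof.
move=> [c hc]; exists (mkseq (fun i => x * c`_i) (size Bs)).
have -> : \sum_(i < size Bs) (mkseq (fun i => x * c`_i) (size Bs))`_i *: Bs`_i
   = x *: \sum_(i < size Bs) c`_i *: Bs`_i.
  by rewrite scaler_sumr; apply: eq_bigr => i _; rewrite nth_mkseq // scalerA.
by rewrite -scalerBr; apply: idealZ.
Qed.

Lemma RepX m : Rep 'X_[m].
Proof.
case: (leqP (mdeg m) d) => hm; last first.
  exists [::]; rewrite big1 ?subr0; first exact: reduce.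
  by move=> i _; rewrite nth_nil scale0r.
have mB : 'X_[m] \in Bs.
  apply/mapP; exists (BMultinom (hm : mdeg m < d.+1)%N) => //.
  by rewrite mem_enum.
have jlt : (index 'X_[m] Bs < size Bs)%N by rewrite index_mem.
exists (mkseq (fun i => if i == index 'X_[m] Bs then 1 else 0) (size Bs)).
rewrite (bigD1 (Ordinal jlt)) //= nth_mkseq // eqxx scale1r nth_index // big1 ?addr0 ?subrr.
  exact: ideal0.
move=> i ij; rewrite nth_mkseq //; case: eqP => [e|]; last by rewrite scale0r.
by move: ij; rewrite -val_eqE /= e eqxx.
Qed.

Lemma findim : fin_dim_quotient Gs.
Proof.
exists Bs => p; elim/mpolyind: p => [|c m p _ _ hp]; first exact: Rep0.
by apply: RepD => //; apply: RepZ; apply: RepX.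
Qed.

End Reduce.

Section Necessity.
Variables (k : fieldType) (n d : nat) (Gamma : {set {set 'I_n}}) (S : 'I_d -> {set 'I_n})
  (a : 'I_d -> 'I_n -> k).
Hypothesis hsc : simplicial_complex Gamma.
Hypothesis hsupp : forall i, supp (a i) = S i.

Lemma kernel_vec (F : {set 'I_n}) :
  (#|[set i | S i :&: F != set0]| < #|F|)%N ->
  exists v : 'I_n -> k, [/\ exists w0, v w0 != 0, forall w, w \notin F -> v w = 0
     & forall i, \sum_w a i w * v w = 0].
Proof.
set I := [set i | S i :&: F != set0] => cI.
pose A : 'M[k]_(#|F|, #|I|) := \matrix_(j, l) a (enum_val l) (enum_val j).
have kn0 : kermx A != 0.
  apply/eqP => e; have := mxrank_ker A; rewrite e mxrank0 => /esym /eqP.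
  rewrite subn_eq0 leqNgt => /negP; apply; apply: leq_ltn_trans cI; exact: rank_leq_col.
have [j0 rj0] : exists j0, row j0 (kermx A) != 0.
  apply/existsP; apply: contraR kn0 => /existsPn h; apply/eqP/row_matrixP => j.
  by have /negPn/eqP -> := h j; rewrite [RHS]row0.
have [u [rj1 uA]] : exists u : 'rV[k]_#|F|, u != 0 /\ u *m A = 0.
  by exists (row j0 (kermx A)); rewrite -row_mul mulmx_ker row0.
clear rj0; rename rj1 into rj0.
have [l0 ul0] : exists l0, u 0 l0 != 0.
  apply/existsP; apply: contraR rj0 => /existsPn h; apply/eqP/rowP => j.
  by have /negPn/eqP -> := h j; rewrite [RHS]mxE.
pose v w := \sum_j (if enum_val j == w then u 0 j else 0).
have vE j : v (enum_val j) = u 0 j.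
  rewrite /v (bigD1 j) //= eqxx big1 ?addr0 // => j' /negbTE jj'.
  by case: eqP => // /enum_val_inj e; rewrite e eqxx in jj'.
exists v; split.
- by exists (enum_val l0); rewrite vE.
- move=> w wF; rewrite /v big1 // => j _; case: eqP => // e.
  by move: wF; rewrite -e enum_valP.
- move=> i.
  have -> : \sum_w a i w * v w = \sum_j u 0 j * a i (enum_val j).
    rewrite /v; under eq_bigr => w _ do rewrite mulr_sumr.
    rewrite exchange_big /=; apply: eq_bigr => j _.
    rewrite (bigD1 (enum_val j)) //= eqxx big1 ?addr0; first by rewrite mulrC.
    by move=> w /negbTE ne; rewrite eq_sym ne mulr0.
  case: (boolP (i \in I)) => iI.
    have [l ->] : exists l : 'I_#|I|, i = enum_val l.
      by exists (enum_rank_in iI i); rewrite enum_rankK_in.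
    have := congr1 (fun M : 'M[k]_(1, #|I|) => M 0 l) uA; rewrite [LHS]mxE [RHS]mxE => e.
    by apply: etrans e; apply: eq_bigr => j _; rewrite [A j l]mxE.
  rewrite big1 // => j _.
  have : a i (enum_val j) == 0.
    apply: contraR iI => h; rewrite inE; apply/set0Pn; exists (enum_val j).
    by rewrite inE enum_valP andbT -hsupp inE.
  by move/eqP ->; rewrite mulr0.
Qed.

Lemma necessity : is_lsop Gamma (fun i => linform (a i)) ->
  forall F, F \in Gamma -> (#|F| <= #|[set i | S i :&: F != set0]|)%N.
Proof.
move=> [B HB] F FG; rewrite leqNgt; apply/negP => cI.
have [v [[w0 vw0] vF va]] := kernel_vec cI.
pose h w : {poly k} := (v w)%:P * 'X.
pose phi := mmap (@polyC k) h.
have phiX w : phi 'X_w = h w by rewrite /phi mmapX mmap1U.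
have phiZ c p : phi (c *: p) = c%:P * phi p by rewrite /phi mmapZ.
have phiM p q : phi (p * q) = phi p * phi q by rewrite /phi rmorphM.
have phiB p q : phi (p - q) = phi p - phi q by rewrite /phi rmorphB.
have phiXn p m : phi (p ^+ m) = phi p ^+ m by rewrite /phi rmorphXn.
have phiS (I : Type) (r : seq I) (P : pred I) (G : I -> {mpoly k[n]}) :
  phi (\sum_(i <- r | P i) G i) = \sum_(i <- r | P i) phi (G i) by rewrite /phi raddf_sum.
have phiG : forall q, q \in SR_gens k Gamma ++ [seq (fun i => linform (a i)) i | i <- enum 'I_d] ->
    phi q = 0.
  move=> q; rewrite mem_cat => /orP[/mapP[F' + ->]|/mapP[i _ ->]].
  - rewrite mem_enum inE => nF'.
    have [w /andP[wF' wnF]] : exists w, (w \in F') && (w \notin F).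
      apply/existsP; apply: contraR nF' => /existsPn h'; apply: (hsc.2 F) => //.
      by apply/subsetP => w wF'; have := h' w; rewrite wF' /= negbK.
    rewrite /monoF (big_morph phi phiM (rmorph1 _)) (bigD1 w) //= phiX /h vF //.
    by rewrite mul0r mul0r.
  - rewrite /linform /phi raddf_sum /=.
    under eq_bigr => w _ do rewrite mmapZ mmapX mmap1U /h mulrA -polyCM.
    by rewrite -mulr_suml -(raddf_sum (@polyC k)) va mul0r.
pose N := (\max_(b <- B) size (phi b))%N.
have [c hc] := HB ('X_w0 ^+ N).
have : phi ('X_w0 ^+ N - \sum_(i < size B) c`_i *: B`_i) = 0.
  move/in_idealP: hc => [f ->]; rewrite /phi raddf_sum big1 // => j _.
  change (phi (f j * (SR_gens k Gamma ++ [seq linform (a i) | i <- enum (ordinal d)])`_j) = 0).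
  by rewrite phiM (phiG _ (mem_nth 0 (ltn_ord j))) mulr0.
rewrite phiB phiS => /eqP; rewrite subr_eq0 => /eqP e.
have := congr1 (fun p : {poly k} => p`_N) e; clear e.
rewrite phiXn phiX /h exprMn -rmorphXn coefCM coefXn eqxx mulr1 coef_sum big1.
  by move/eqP; rewrite expf_eq0 (negbTE vw0) andbF.
move=> i _; rewrite phiZ coefCM [(phi _)`_N]nth_default ?mulr0 //.
by rewrite /N; apply: leq_bigmax_seq => //; apply: mem_nth.
Qed.

End Necessity.

Lemma finchoice (Ix : eqType) (B : Type) (Q : Ix -> B -> Prop) (b0 : B) (s : seq Ix) :
  (forall j, j \in s -> exists b, Q j b) -> exists f : Ix -> B, forall j, j \in s -> Q j (f j).
Proof.
elim: s => [|j s IH] H; first by exists (fun _ => b0) => j; rewrite in_nil.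
have sub : {subset s <= j :: s} by move=> z zs; rewrite in_cons zs orbT.
have [f hf] := IH (fun j' h => H j' (sub _ h)).
have [b hb] := H j (mem_head _ _).
exists (fun j' => if j' == j then b else f j') => j'; rewrite in_cons.
by case: eqP => [->|_] //= /hf.
Qed.

Unset Implicit Arguments.

Theorem lemma2p2 (k : fieldType) (n d : nat) (Gamma : {set {set 'I_n}})
    (S : 'I_d -> {set 'I_n}) :
  infinite_field k ->
  simplicial_complex Gamma ->
  has_dim_minus1 Gamma d ->
  (forall i, S i \subset vertices Gamma) ->
  (exists a : 'I_d -> 'I_n -> k,
      is_lsop Gamma (fun i => linform (a i)) /\ forall i, supp (a i) = S i)
  <->
  (forall F : {set 'I_n}, F \in Gamma ->
      (#|F| <= #|[set i : 'I_d | S i :&: F != set0]|)%N).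
Proof.
move=> inf hsc hdim hSv; split.
  by move=> [a [ls hs]]; apply: (necessity hsc hs ls).
move=> hc.
have hbound : forall F, F \in Gamma -> (#|F| <= d)%N.
  by move=> F FG; rewrite -hdim; apply: leq_bigmax_cond.
suff [a [hs hsp]] : exists a : 'I_d -> 'I_n -> k, (forall i, supp (a i) = S i) /\
  (forall G, G \in Gamma -> forall w, w \in G ->
     exists lam : 'I_d -> k, forall u, u \in G -> \sum_i lam i * a i u = (u == w)%:R).
  by exists a; split => //; apply: findim hbound hsp.
case: (posnP d) => [d0|dpos].
  exists (fun _ _ => 0); split.
    by move=> i; have := ltn_ord i; rewrite {2}d0.
  move=> G GG w wG; have := hbound G GG; rewrite d0 leqn0 cards_eq0 => /eqP G0.
  by rewrite G0 inE in wG.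
pose i0 : 'I_d := Ordinal dpos.
have nbE : forall H : {set 'I_n}, nb (fun w i => w \in S i) H setT = [set i | S i :&: H != set0].
  move=> H; apply/setP => i; rewrite !inE /=.
  apply/existsP/set0Pn => [[w /andP[wH wS]]|[w]]; first by exists w; rewrite inE wS.
  by rewrite inE => /andP[wS wH]; exists w; rewrite wH.
have hm : forall G : {set 'I_n}, G \in enum Gamma -> exists s : 'I_n -> 'I_d,
   {in G &, injective s} /\ forall w, w \in G -> w \in S (s w).
  move=> G; rewrite mem_enum => GG.
  have hh : forall H : {set 'I_n}, H \subset G ->
      (#|H| <= #|nb (fun w i => w \in S i) H setT|)%N.
    by move=> H HG; rewrite nbE; apply: hc; apply: (hsc.2 G).
  have [s [inj hs]] := @hall 'I_d 'I_n (fun w i => w \in S i) i0 #|G| G setT (leqnn _) hh.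
  by exists s; split => // w wG; have /andP[_ ->] := hs w wG.
have [sig hsig] := @finchoice _ _ (fun (G : {set 'I_n}) (s : 'I_n -> 'I_d) =>
   {in G &, injective s} /\ forall w, w \in G -> w \in S (s w)) (fun _ => i0) (enum Gamma) hm.
apply: (@construct k n d Gamma S sig) => //.
by move=> G GG; apply: hsig; rewrite mem_enum.
Qed.
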